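(* Let $K$ be a field of characteristic $p>0$. Then $\{\partial^{[\alpha]}\mid\alpha\in\mathbb{N}^n\}$ is the only iterative $(-\mathrm{ad}(x_1),\ldots,-\mathrm{ad}(x_n))$-descent in $\mathcal{D}(P_n)$ indexed by $\mathbb{N}^n$.
   Context: $P_n=K[x_1,\ldots,x_n]$, $\partial_i^{[k]}=\partial_i^k/k!$ acting on $P_n$ by $\partial_i^{[k]}(x^m)=\binom{m_i}{k}x^{m-ke_i}$, $\partial^{[\alpha]}=\prod_i\partial_i^{[\alpha_i]}$; $\mathcal{D}(P_n)=\bigoplus_\alpha P_n\partial^{[\alpha]}\subseteq\mathrm{End}_K(P_n)$ is the ring of differential operators; $\mathrm{ad}(a)(b)=ab-ba$. For commuting derivations $\delta=(\delta_1,\ldots,\delta_n)$ of a ring $A$, a family $\{y^{[\alpha]}\mid\alpha\in\mathbb{N}^n\}$ is an iterative $\delta$-descent if $y^{[0]}=1$, $y^{[\alpha]}y^{[\beta]}=\binom{\alpha+\beta}{\beta}y^{[\alpha+\beta]}$ (multi-binomial coefficient $\prod_i\binom{\alpha_i+\beta_i}{\beta_i}$ taken in $\mathbb{F}_p$) and $\delta_1^{\alpha_1}\cdots\delta_n^{\alpha_n}(y^{[\beta]})=y^{[\beta-\alpha]}$ for all $\alpha,\beta\in\mathbb{N}^n$, with $y^{[\gamma]}=0$ for $\gamma\notin\mathbb{N}^n$. *)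

(* Defs.v *)
From HB Require Import structures.
From mathcomp Require Import all_boot all_order all_algebra.
From mathcomp Require Export mpoly.
Set Implicit Arguments. Unset Strict Implicit. Unset Printing Implicit Defensive.
Import Order.TTheory GRing.Theory.
Local Open Scope ring_scope.

Section DiffOps.
Variables (K : fieldType) (n : nat).

Notation P := {mpoly K[n]}.

(* K-endomorphisms of P_n are represented as functions P -> P
   (linearity is implied by membership in D(P_n) below). *)
Definition op := P -> P.

Definition opmul (a b : op) : op := fun q => a (b q).
Definition opid : op := fun q => q.

Definition opmulpoly (f : P) : op := fun q => f * q.

Definition dpow (a : 'X_{1..n}) : op := fun q =>
  \sum_(m <- msupp q)
     (q@_m * (\prod_(i < n) 'C(m i, a i))%:R) *: 'X_[(m - a)%MM].

Definition mbinom (a b : 'X_{1..n}) : K :=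
  (\prod_(i < n) 'C((a + b)%MM i, b i))%:R.

Definition is_diffop (T : op) : Prop :=
  exists s : seq ('X_{1..n} * P),
    forall q, T q = \sum_(c <- s) c.2 * dpow c.1 q.

(* the derivation  -ad(x_i) : b |-> b x_i - x_i b *)
Definition mad (i : 'I_n) (b : op) : op :=
  fun q => b ('X_i * q) - 'X_i * b q.

Definition mads (a : 'X_{1..n}) (b : op) : op :=
  foldr (fun i c => iter (a i) (mad i) c) b (enum 'I_n).

Definition iterative_descent (y : 'X_{1..n} -> op) : Prop :=
  [/\ forall a, is_diffop (y a),
      forall q, y 0%MM q = q,
      forall a b q, opmul (y a) (y b) q = mbinom a b *: y (a + b)%MM q &
      forall a b q, mads a (y b) q =
                    if (a <= b)%MM then y (b - a)%MM q else 0].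

End DiffOps.

(* Main.v *)
Require Import Defs.
From HB Require Import structures.
From mathcomp Require Import all_boot all_order all_algebra.
From mathcomp Require Import ssrcomplements mpoly zify ring.
From Stdlib Require Import FunctionalExtensionality.
Set Implicit Arguments. Unset Strict Implicit. Unset Printing Implicit Defensive.
Import GRing.Theory.
Local Open Scope ring_scope.

Section A.
Variables (K : fieldType) (n : nat).
Notation P := {mpoly K[n]}.
Notation M := 'X_{1..n}.

Definition lsum (G : M -> P) (q : P) := \sum_(m <- msupp q) q@_m *: G m.

Lemma lsumE G q k : (msize q <= k)%N ->
  lsum G q = \sum_(m : 'X_{1..n < k}) q@_m *: G m.
Proof.
move=> lt_pk; pose I : subFinType _ := 'X_{1..n < k}.
rewrite /lsum (big_mksub I) //=; first last.
  by move=> x /msize_mdeg_lt /leq_trans; apply.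
  by rewrite msupp_uniq.
by rewrite big_rmcond //= => i; move/memN_msupp_eq0 ->; rewrite scale0r.
Qed.

Definition lin (T : P -> P) := forall c q1 q2, T (c *: q1 + q2) = c *: T q1 + T q2.

Lemma lsum_lin G : lin (lsum G).
Proof.
move=> c q1 q2.
set k := maxn (msize (c *: q1 + q2)) (maxn (msize q1) (msize q2)).
have h1 : (msize (c *: q1 + q2) <= k)%N by rewrite leq_maxl.
have h2 : (msize q1 <= k)%N by rewrite /k !leq_max leqnn orbT.
have h3 : (msize q2 <= k)%N by rewrite /k !leq_max leqnn !orbT.
rewrite (lsumE _ h1) (lsumE _ h2) (lsumE _ h3).
rewrite scaler_sumr -big_split /=; apply: eq_bigr => m _.
by rewrite mcoeffD mcoeffZ scalerDl scalerA.
Qed.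

Lemma lsumX G m : lsum G 'X_[m] = G m.
Proof. by rewrite /lsum msuppX big_seq1 mcoeffX eqxx scale1r. Qed.

Lemma lin0 T : lin T -> T 0 = 0.
Proof. move=> h; have := h (-1) 0 0; rewrite scaler0 addr0 scaleN1r addNr; exact. Qed.
Lemma linD T : lin T -> forall q1 q2, T (q1 + q2) = T q1 + T q2.
Proof. by move=> h q1 q2; have := h 1 q1 q2; rewrite !scale1r. Qed.
Lemma linZ T : lin T -> forall c q, T (c *: q) = c *: T q.
Proof. by move=> h c q; have := h c q 0; rewrite (lin0 h) !addr0. Qed.

Lemma lin_sum T : lin T -> forall (I : Type) (s : seq I) (c : I -> K) (g : I -> P),
  T (\sum_(x <- s) c x *: g x) = \sum_(x <- s) c x *: T (g x).
Proof.
move=> h I s c g; elim: s => [|x s IH]; first by rewrite !big_nil lin0.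
by rewrite !big_cons linD // linZ // IH.
Qed.

Lemma lin_sumX T : lin T -> forall q, T q = \sum_(m <- msupp q) q@_m *: T 'X_[m].
Proof. by move=> h q; rewrite {1}(mpolyE q) lin_sum. Qed.

Lemma lin_ext T1 T2 : lin T1 -> lin T2 -> (forall m, T1 'X_[m] = T2 'X_[m]) ->
  forall q, T1 q = T2 q.
Proof.
move=> h1 h2 e q; rewrite (lin_sumX h1) (lin_sumX h2).
by apply: eq_bigr => m _; rewrite e.
Qed.

Lemma lin_comp T1 T2 : lin T1 -> lin T2 -> lin (fun q => T1 (T2 q)).
Proof. by move=> h1 h2 c q1 q2 /=; rewrite h2 h1. Qed.
Lemma lin_scale c T : lin T -> lin (fun q => c *: T q).
Proof. by move=> h d q1 q2 /=; rewrite h scalerDr !scalerA mulrC. Qed.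
Lemma lin_sub T1 T2 : lin T1 -> lin T2 -> lin (fun q => T1 q - T2 q).
Proof.
move=> h1 h2 d q1 q2 /=; rewrite h1 h2 scalerBr.
by rewrite opprD addrACA.
Qed.
Lemma lin_mulX i T : lin T -> lin (fun q => 'X_i * T q).
Proof. by move=> h d q1 q2 /=; rewrite h mulrDr scalerAr. Qed.
Lemma lin_Xmul i T : lin T -> lin (fun q => T ('X_i * q)).
Proof. by move=> h d q1 q2 /=; rewrite mulrDr -scalerAr h. Qed.
Lemma lin_mulp f T : lin T -> lin (fun q => f * T q).
Proof. by move=> h d q1 q2 /=; rewrite h mulrDr scalerAr. Qed.
Lemma lin_id : lin (fun q => q).
Proof. by []. Qed.

Definition bc (a m : M) := (\prod_(i < n) 'C(m i, a i))%N.

Lemma dpowE a : dpow a =1 lsum (fun m => (bc a m)%:R *: 'X_[(m - a)%MM]).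
Proof. by move=> q; rewrite /dpow /lsum; apply: eq_bigr => m _; rewrite scalerA. Qed.

Lemma dpow_lin a : lin (@dpow K n a).
Proof. by move=> c q1 q2; rewrite !dpowE lsum_lin. Qed.

Lemma dpowX a m : dpow a 'X_[m] = (bc a m)%:R *: 'X_[(m - a)%MM] :> P.
Proof. by rewrite dpowE lsumX. Qed.

Lemma bc0 a m : ~~ (a <= m)%MM -> bc a m = 0%N.
Proof.
move=> /mnm_lepP h.
have [i hi] : exists i, (m i < a i)%N.
  case: (pickP (fun i => (m i < a i)%N)) => [i hi|h2]; first by exists i.
  by exfalso; apply: h => i; have := h2 i => /negbT; rewrite -leqNgt.
by rewrite /bc (bigD1 i) //= bin_small.
Qed.


Lemma dpow0 (q : P) : dpow 0%MM q = q.
Proof.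
apply: (@lin_ext (@dpow K n 0%MM) (fun q => q) (dpow_lin _) lin_id) => m.
by rewrite dpowX subm0 /bc big1 ?scale1r // => i _; rewrite mnm0E bin0.
Qed.

Lemma bin_comp (m a b : nat) :
  ('C(m, b) * 'C(m - b, a) = 'C(a + b, b) * 'C(m, a + b))%N.
Proof.
have [le|lt] := leqP (a + b) m; last first.
  rewrite (bin_small lt) muln0.
  have [leb|ltb] := leqP b m; last by rewrite bin_small.
  by rewrite (@bin_small (m - b)) ?muln0 //; lia.
have lebm : (b <= m)%N by lia.
have leam : (a <= m - b)%N by lia.
apply/eqP; rewrite -(@eqn_pmul2r ((b`! * a`!) * (m - (a + b))`!)); last first.
  by rewrite !muln_gt0 !fact_gt0.
apply/eqP.
have e1 := bin_fact lebm. have e2 := bin_fact leam. have e3 := bin_fact le.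
have e4 := bin_fact (leq_addl a b).
have hs : (m - b - a = m - (a + b))%N by lia.
rewrite hs in e2. rewrite addnK in e4.
transitivity ('C(m, b) * (b`! * ('C(m - b, a) * (a`! * (m - (a + b))`!))))%N.
  ring.
rewrite e2 e1.
transitivity (('C(a + b, b) * (b`! * a`!)) * ('C(m, a + b) * (m - (a + b))`!))%N; last by ring.
by rewrite e4 -e3; ring.
Qed.

Lemma dpow_comp a b q :
  dpow a (dpow b q) = @mbinom K n a b *: dpow (a + b)%MM q :> P.
Proof.
apply: (@lin_ext (fun q => dpow a (dpow b q)) (fun q => @mbinom K n a b *: dpow (a + b)%MM q)
  (lin_comp (dpow_lin _) (dpow_lin _)) (lin_scale _ (dpow_lin _))) => m.
rewrite !dpowX linZ ?dpowX; last exact: dpow_lin.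
rewrite !scalerA /mbinom -!natrM.
have -> : (m - b - a = m - (a + b))%MM.
  by apply/mnmP => i; rewrite !mnmBE mnmDE; lia.
congr (_%:R *: _); rewrite /bc -!big_split /=; apply: eq_bigr => i _.
by rewrite mnmBE mnmDE bin_comp.
Qed.

Lemma bc_shift b (i : 'I_n) m :
  bc b (U_(i) + m)%MM = (bc b m + (if (0 < b i)%N then bc (b - U_(i))%MM m else 0))%N.
Proof.
rewrite /bc (bigD1 i) //= [X in (X + _)%N](bigD1 i) //=.
have eR : (\prod_(j < n | j != i) 'C((U_(i) + m)%MM j, b j) =
          \prod_(j < n | j != i) 'C(m j, b j))%N.
  by apply: eq_bigr => j hj; rewrite mnmDE mnm1E eq_sym (negbTE hj).
rewrite eR mnmDE mnm1E eqxx.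
case hbi: (b i) => [|k] /=; first by rewrite !bin0 addn0.
have e3 : (\prod_(j < n) 'C(m j, (b - U_(i))%MM j) =
          'C(m i, k) * \prod_(j < n | j != i) 'C(m j, b j))%N.
  rewrite (bigD1 i) //= mnmBE mnm1E eqxx hbi subn1 /=; congr (_ * _)%N.
  by apply: eq_bigr => j hj; rewrite mnmBE mnm1E eq_sym (negbTE hj) subn0.
by rewrite e3 add1n binS mulnDl.
Qed.

Lemma bc_neq0 b m : bc b m <> 0%N -> (b <= m)%MM.
Proof. by case: (boolP (b <= m)%MM) => // /bc0. Qed.

Lemma lin_zero : lin (fun _ : P => 0).
Proof. by move=> c q1 q2; rewrite scaler0 addr0. Qed.

Lemma dpow_comm b (i : 'I_n) (q : P) :
  dpow b ('X_i * q) - 'X_i * dpow b q =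
  if (0 < b i)%N then dpow (b - U_(i))%MM q else 0.
Proof.
have L : lin (fun q => dpow b ('X_i * q) - 'X_i * dpow b q).
  exact: lin_sub (lin_Xmul _ (dpow_lin _)) (lin_mulX _ (dpow_lin _)).
have key : forall m, dpow b ('X_i * 'X_[m]) - 'X_i * dpow b 'X_[m] =
   (if (0 < b i)%N then bc (b - U_(i))%MM m else 0%N)%:R *: 'X_[((U_(i) + m) - b)%MM] :> P.
  move=> m; rewrite -mpolyXD !dpowX -scalerAr -mpolyXD.
  case: (boolP (b <= m)%MM) => hbm.
    have -> : (U_(i) + (m - b) = (U_(i) + m) - b)%MM.
      apply/mnmP => j; rewrite !mnmDE !mnmBE mnmDE.
      by move/mnm_lepP: hbm => /(_ j); lia.
    by rewrite -scalerBl -natrB bc_shift ?leq_addr // addKn.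
  by rewrite (bc0 hbm) scale0r subr0 bc_shift (bc0 hbm) add0n.
case: ifP => hb.
  apply: (lin_ext L (dpow_lin _)) => m.
  rewrite key hb dpowX; congr (_ *: 'X_[_]).
  apply/mnmP => j; rewrite !mnmBE mnmDE mnm1E.
  by case: (i =P j) => [<-|]; [lia | rewrite subn0 add0n].
apply: (lin_ext L lin_zero) => m.
by rewrite key hb scale0r.
Qed.

Lemma iter_mad0 (i : 'I_n) k : iter k (@mad K n i) (fun _ => 0) = (fun _ => 0).
Proof.
elim: k => //= k ->; apply: functional_extensionality => q.
by rewrite /mad mulr0 subr0.
Qed.

Lemma iter_mad_dpow (i : 'I_n) k c :
  iter k (@mad K n i) (dpow c) =
  if (k <= c i)%N then dpow (c - U_(i) *+ k)%MM else (fun _ => 0).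
Proof.
elim: k => [|k IH] /=; first by congr dpow; apply/mnmP => j; rewrite mnmBE mulmnE muln0 subn0.
rewrite IH; case: (leqP k (c i)) => hk; last first.
  rewrite ifN; last by rewrite -ltnNge ltnW.
  by apply: functional_extensionality => q; rewrite /mad mulr0 subr0.
apply: functional_extensionality => q; rewrite /mad dpow_comm mnmBE mulmnE mnm1E eqxx mul1n.
case: ifP => h1; case: ifP => h2 //; try lia.
congr (dpow _ q); apply/mnmP => j; rewrite !mnmBE !mulmnE mnm1E.
by case: (i == j); lia.
Qed.

Lemma foldr_mads (a b : M) (s : seq 'I_n) : uniq s ->
  foldr (fun i c => iter (a i) (@mad K n i) c) (dpow b) s =
  if all (fun j => a j <= b j)%N s
  then dpow (b - [multinom (if j \in s then a j else 0%N) | j < n])%MM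
  else (fun _ => 0).
Proof.
elim: s => [|j s IH] /=.
  by move=> _; congr dpow; apply/mnmP => j; rewrite mnmBE mnmE subn0.
case/andP => hj hu; rewrite IH //.
case: (all _ s); last by rewrite andbF iter_mad0.
rewrite andbT iter_mad_dpow mnmBE mnmE (negbTE hj) subn0.
case: ifP => // _; congr dpow; apply/mnmP => k.
rewrite !mnmBE !mnmE mulmnE mnm1E in_cons.
case: (j =P k) => [<-|hjk] /=; first by rewrite (negbTE hj) eqxx /= subn0 mul1n.
have -> : (k == j) = false by apply/eqP => e; apply: hjk; rewrite e.
by rewrite /= mul0n subn0.
Qed.

Lemma mads_dpow a b :
  @mads K n a (dpow b) = if (a <= b)%MM then dpow (b - a)%MM else (fun _ => 0).
Proof.
rewrite /mads foldr_mads ?enum_uniq //.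
have -> : all (fun j => a j <= b j)%N (enum 'I_n) = (a <= b)%MM.
  apply/allP/mnm_lepP => h j //; apply: h; exact: mem_enum.
case: ifP => // _; congr dpow; congr (_ - _)%MM; apply/mnmP => j.
by rewrite mnmE mem_enum.
Qed.

Lemma foldr_madsU (i : 'I_n) (T : op K n) (s : seq 'I_n) : uniq s ->
  foldr (fun j c => iter ((U_(i))%MM j) (@mad K n j) c) T s =
  if i \in s then mad i T else T.
Proof.
elim: s => [|j s IH] //= /andP [hj hu]; rewrite IH // in_cons mnm1E.
case: (i =P j) => [e|hij] /=; first by subst j; rewrite (negbTE hj).
by case: ifP.
Qed.

Lemma madsU (i : 'I_n) (T : op K n) : mads U_(i)%MM T = mad i T.
Proof. by rewrite /mads foldr_madsU ?enum_uniq // mem_enum. Qed.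

Lemma diffop_lin (T : op K n) : is_diffop T -> lin T.
Proof.
case=> s hs c q1 q2; rewrite !hs scaler_sumr -big_split /=.
by apply: eq_bigr => x _; rewrite dpow_lin mulrDr scalerAr.
Qed.

Lemma exists_pos (m : M) : m != 0%MM -> exists i, (0 < m i)%N.
Proof.
move=> hm; case: (pickP (fun i => (0 < m i)%N)) => [i hi|h]; first by exists i.
exfalso; move/eqP: hm; apply; apply/mnmP => j; rewrite mnm0E.
by have := h j => /negbT; rewrite lt0n negbK => /eqP.
Qed.

Lemma U_split (m : M) (i : 'I_n) : (0 < m i)%N -> m = (U_(i) + (m - U_(i)))%MM.
Proof.
move=> h; apply/mnmP => j; rewrite mnmDE mnmBE mnm1E.
by case: (i =P j) => [<-|_] /=; lia.
Qed.

Lemma commute_mul (z : P -> P) : lin z ->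
  (forall (i : 'I_n) q, z ('X_i * q) = 'X_i * z q) -> forall q, z q = q * z 1.
Proof.
move=> hl hc.
have step : forall k (m : M), (mdeg m <= k)%N -> forall q, z ('X_[m] * q) = 'X_[m] * z q.
  elim=> [|k IH] m hm q.
    have : m == 0%MM by rewrite -mdeg_eq0 -leqn0.
    by move/eqP ->; rewrite mpolyX0 !mul1r.
  case: (eqVneq m 0%MM) => [->|hm0]; first by rewrite mpolyX0 !mul1r.
  have [i hi] := exists_pos hm0.
  have hs := U_split hi.
  have hd : (mdeg (m - U_(i)) <= k)%N.
    by move: hm; rewrite {1}hs mdegD mdeg1 add1n ltnS.
  rewrite hs mpolyXD -mulrA hc IH //; exact: mulrA.
move=> q; rewrite (lin_sumX hl) {3}(mpolyE q) mulr_suml; apply: eq_bigr => m _.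
by rewrite -(mulr1 'X_[m]) (step _ _ (leqnn _)) mulr1 scalerAl.
Qed.

Lemma msum_le (I : eqType) (s : seq I) (F : I -> P) N :
  (forall x, x \in s -> (msize (F x) <= N)%N) -> (msize (\sum_(x <- s) F x) <= N)%N.
Proof.
elim: s => [|x s IH] h; first by rewrite big_nil msize0.
rewrite big_cons (leq_trans (msizeD_le _ _)) // geq_max h ?mem_head //.
by apply: IH => u hu; apply: h; rewrite in_cons hu orbT.
Qed.

Lemma msize_dpow b (g : P) : b != 0%MM -> (msize (dpow b g) <= (msize g).-1)%N.
Proof.
move=> hb; rewrite /dpow; apply: msum_le => m hm.
have hlt := msize_mdeg_lt hm.
case: (eqVneq (bc b m) 0%N) => [|h].
  by rewrite /bc => ->; rewrite mulr0 scale0r msize0.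
have hbm := bc_neq0 (elimN eqP h).
rewrite (leq_trans (msizeZ_le _ _)) // msizeX.
have e : mdeg m = (mdeg (m - b) + mdeg b)%N by rewrite -mdegD submK.
have : (0 < mdeg b)%N by rewrite lt0n mdeg_eq0.
lia.
Qed.

Lemma no_nilp b (f : P) : b != 0%MM -> f != 0 -> forall k,
  exists r, iter k (fun q => dpow b q + q * f) 1 = f ^+ k + r /\
            (msize r < msize (f ^+ k))%N.
Proof.
move=> hb hf; have hsf : (0 < msize f)%N by rewrite lt0n msize_poly_eq0.
elim=> [|k [r [e hr]]] /=.
  by exists 0; rewrite expr0 addr0 msize0 msize1.
rewrite e; exists (dpow b (f ^+ k + r) + r * f); split.
  by rewrite mulrDl exprSr; ring.
have hfk : f ^+ k != 0 by rewrite expf_neq0.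
have hsk : (0 < msize (f ^+ k))%N by rewrite lt0n msize_poly_eq0.
rewrite exprSr msizeM //; apply: (leq_ltn_trans (msizeD_le _ _)); rewrite gtn_max.
apply/andP; split.
  have h1 := msize_dpow (f ^+ k + r) hb.
  have h2 := msizeD_le (f ^+ k) r.
  have h3 : (maxn (msize (f ^+ k)) (msize r) = msize (f ^+ k))%N by apply/maxn_idPl; exact: ltnW.
  rewrite h3 in h2; move: h1 h2 hsk hsf.
  set A := msize (f ^+ k); set B := msize f; set C := msize (f ^+ k + r).
  set D := msize (dpow b (f ^+ k + r)); lia.
case: (eqVneq r 0) => [->|hr0].
  rewrite mul0r msize0; move: hsk hsf.
  set A := msize (f ^+ k); set B := msize f; lia.
rewrite msizeM //; move: hsk hsf hr.
set A := msize (f ^+ k); set B := msize f; set C := msize r; lia.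
Qed.

Lemma U_le (b : M) (i : 'I_n) : (U_(i) <= b)%MM = (0 < b i)%N.
Proof.
apply/mnm_lepP/idP => [/(_ i)|h j]; first by rewrite mnm1E eqxx.
by rewrite mnm1E; case: (i =P j) => [<-|] //.
Qed.

Section Uniq.
Variables (p : nat) (hp : p \in [pchar K]) (y : M -> op K n).
Hypothesis (H1 : forall a, is_diffop (y a)) (H2 : forall q, y 0%MM q = q)
  (H3 : forall a b q, opmul (y a) (y b) q = @mbinom K n a b *: y (a + b)%MM q)
  (H4 : forall a b q, mads a (y b) q = if (a <= b)%MM then y (b - a)%MM q else 0).

Lemma ylin a : lin (y a).
Proof. exact: diffop_lin. Qed.

Lemma y_shape b : (forall c, (mdeg c < mdeg b)%N -> forall q, y c q = dpow c q) ->
  b != 0%MM -> forall q, y b q = dpow b q + q * y b 1.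
Proof.
move=> IH hb.
pose z q := y b q - dpow b q.
have hz : lin z by exact: lin_sub (ylin _) (dpow_lin _).
have hc : forall (i : 'I_n) q, z ('X_i * q) = 'X_i * z q.
  move=> i q; have e1 := H4 U_(i) b q; rewrite madsU U_le /mad in e1.
  have e2 := dpow_comm b i q.
  have e3 : y b ('X_i * q) - 'X_i * y b q = dpow b ('X_i * q) - 'X_i * dpow b q.
    rewrite e1 e2; case: ifP => // hbi; apply: IH.
    by rewrite {2}(U_split hbi) mdegD mdeg1.
  apply/eqP; rewrite -subr_eq0 /z.
  have -> : y b ('X_i * q) - dpow b ('X_i * q) - 'X_i * (y b q - dpow b q) =
     (y b ('X_i * q) - 'X_i * y b q) - (dpow b ('X_i * q) - 'X_i * dpow b q) by ring.
  by rewrite e3 subrr.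
have d1 : dpow b (1 : P) = 0.
  rewrite -mpolyX0 dpowX bc0 ?scale0r //; apply: contra hb => hb0.
  apply/eqP/mnmP => j; rewrite mnm0E; move/mnm_lepP: hb0 => /(_ j).
  by rewrite mnm0E leqn0 => /eqP.
move=> q; have := commute_mul hz hc q; rewrite /z d1 subr0 => <-.
by rewrite addrC subrK.
Qed.

Lemma ypow b k : exists c : K, forall q, iter k.+1 (y b) q = c *: y (b *+ k.+1)%MM q.
Proof.
elim: k => [|k [c hc]].
  by exists 1 => q /=; rewrite scale1r; congr (y _ q); apply/mnmP => j; rewrite mulmnE muln1.
exists (c * @mbinom K n b (b *+ k.+1)%MM) => q.
rewrite iterS hc linZ; last exact: ylin.
have := H3 b (b *+ k.+1)%MM q; rewrite /opmul => ->; rewrite scalerA.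
congr (_ *: y _ q); apply/mnmP => j; rewrite mnmDE !mulmnE; lia.
Qed.

Lemma mbinom_zero b : b != 0%MM -> @mbinom K n b (b *+ p.-1)%MM = 0 :> K.
Proof.
move=> hb; have pr := pcharf_prime hp; have p2 := prime_gt1 pr.
have [i hi] := exists_pos hb.
rewrite /mbinom.
suff : (p %| \prod_(j < n) 'C((b + b *+ p.-1)%MM j, (b *+ p.-1)%MM j))%N.
  by case/dvdnP => k ->; rewrite natrM (pcharf0 hp) mulr0.
rewrite (bigD1 i) //= dvdn_mulr //.
rewrite mnmDE !mulmnE.
set m := b i.
have e : (m + m * p.-1 = m * p)%N by rewrite -mulnS prednK // ltnW.
rewrite e.
have e2 : (m * p.-1 = m * p - m)%N by rewrite -e addKn.
rewrite e2 bin_sub; last by rewrite leq_pmulr // ltnW.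
have := mul_bin_diag (m * p) m.-1; rewrite prednK //.
move=> h; apply/dvdnP; exists 'C((m * p).-1, m.-1).
apply/eqP; rewrite -(@eqn_pmul2l m) // -h; apply/eqP; ring.
Qed.

Lemma ypow_zero b : b != 0%MM -> forall q, iter p (y b) q = 0.
Proof.
move=> hb q; have p2 := prime_gt1 (pcharf_prime hp).
have [c hc] := ypow b p.-2.
have ep : p = p.-2.+2 by lia.
rewrite ep iterS hc linZ; last exact: ylin.
have := H3 b (b *+ p.-2.+1)%MM q; rewrite /opmul => ->.
have -> : p.-2.+1 = p.-1 by lia.
by rewrite mbinom_zero // scale0r scaler0.
Qed.

Lemma y_uniq : forall k b, (mdeg b <= k)%N -> forall q, y b q = dpow b q.
Proof.
elim=> [|k IH] b hk q.
  have : b == 0%MM by rewrite -mdeg_eq0 -leqn0.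
  by move/eqP ->; rewrite H2 dpow0.
case: (eqVneq b 0%MM) => [->|hb]; first by rewrite H2 dpow0.
have hs := y_shape (fun c hc => IH c (ltnSE (leq_trans hc hk))) hb.
suff hf0 : y b 1 = 0 by rewrite hs hf0 mulr0 addr0.
apply/eqP; apply: contraT => hf.
have [r [e hr]] := no_nilp hb hf p.
have := ypow_zero hb 1.
rewrite (eq_iter hs) e => /eqP; rewrite addr_eq0 => /eqP e2.
by move: hr; rewrite e2 msizeN ltnn.
Qed.

End Uniq.

End A.

Unset Implicit Arguments. Set Strict Implicit.

Theorem theorem3p1 (K : fieldType) (p : nat) (hp : p \in [pchar K]) (n : nat) :
  iterative_descent (@dpow K n) /\
  (forall y : 'X_{1..n} -> op K n,
     iterative_descent y -> forall a q, y a q = dpow a q).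
Proof.
split.
  split.
  - move=> a; exists [:: (a, 1)] => q; by rewrite big_seq1 mul1r.
  - exact: dpow0.
  - move=> a b q; exact: dpow_comp.
  - by move=> a b q; rewrite mads_dpow; case: ifP.
move=> y [H1 H2 H3 H4] a q.
exact: (y_uniq hp H1 H2 H3 H4 (leqnn _)).
Qed.
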